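(* Let $D$ be a regular $(v,k,\lambda,\mu)$-PDS in a finite group $G$ with $0<\mu<k$ and $\sqrt\Delta\in\mathbb{Z}$. Let $\mathcal{L}$ be the group of linear characters of $G$, $p$ a prime with $p\nmid\sqrt\Delta$, and $P$ a nontrivial Sylow $p$-subgroup of $\mathcal{L}$. Then for every nonprincipal $\xi'\in P$, \[\sum_{\xi\in P}\xi(D)=k+(|P|-1)\xi'(D).\] In particular all nonprincipal characters in $P$ take the same value on $D$.
   Context: A $(v,k,\lambda,\mu)$-PDS in a group $G$ of order $v$ is a $k$-subset $D$ such that every nonidentity element of $D$ is $xy^{-1}$ ($x,y\in D$) in exactly $\lambda$ ways and every nonidentity element of $G\setminus D$ in exactly $\mu$ ways; regular means $D=D^{(-1)}$ and $1\notin D$. $\Delta=(\lambda-\mu)^2+4(k-\mu)$; $\chi(D)=\sum_{d\in D}\chi(d)$. *)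

(* Defs.v *)
From mathcomp Require Import all_boot all_order all_algebra all_fingroup all_solvable all_field all_character.
Set Implicit Arguments. Unset Strict Implicit. Unset Printing Implicit Defensive.
Import Order.TTheory GRing.Theory Num.Theory.
Local Open Scope group_scope.
Local Open Scope ring_scope.

Definition pds_count (gT : finGroupType) (D : {set gT}) (g : gT) : nat :=
  #|[set u in setX D D | (u.1 * u.2^-1)%g == g]|.

Definition is_PDS (gT : finGroupType) (G : {group gT}) (D : {set gT})
    (v k lam mu : nat) : Prop :=
  [/\ D \subset G, #|G| = v, #|D| = k,
      (forall g, g \in D -> g != 1%g -> pds_count D g = lam) &
      (forall g, g \in G :\: D -> g != 1%g -> pds_count D g = mu)].

Definition regular_PDS (gT : finGroupType) (D : {set gT}) : Prop :=
  [set x^-1%g | x in D] = D /\ 1%g \notin D.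

Definition PDS_Delta (k lam mu : nat) : int :=
  ((lam%:Z - mu%:Z) ^+ 2 + 4 * (k%:Z - mu%:Z))%R.

Definition lin_chars (gT : finGroupType) (G : {group gT}) : {set Iirr G} :=
  [set i : Iirr G | 'chi[G]_i \is a linear_char].

(* P is a Sylow p-subgroup of the group of linear characters of G
   (group law: pointwise product of characters; identity: principal 'chi_0). *)
Definition sylow_lin_chars (gT : finGroupType) (G : {group gT}) (p : nat)
    (P : {set Iirr G}) : Prop :=
  [/\ P \subset lin_chars G,
      (0%R : Iirr G) \in P,
      (forall i j, i \in P -> j \in P ->
         exists2 l, l \in P & 'chi[G]_l = 'chi[G]_i * 'chi[G]_j) &
      #|P| = ((#|lin_chars G|)`_p)%N].

Definition chi_at (gT : finGroupType) (G : {group gT}) (i : Iirr G)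
    (D : {set gT}) : algC :=
  (\sum_(d in D) 'chi[G]_i d)%R.

(* Main.v *)
Require Import Defs.
From mathcomp Require Import all_boot all_order all_algebra all_fingroup all_solvable all_field all_character.
From mathcomp Require Import ring.
Import Order.TTheory GRing.Theory Num.Theory.
Local Open Scope ring_scope.

Lemma eqAmodX (e : algC) a b n : a \in Aint -> b \in Aint ->
  (a == b %[mod e])%A -> (a ^+ n == b ^+ n %[mod e])%A.
Proof.
move=> Aa Ab Eab; elim: n => [|n IH]; first by rewrite !expr0.
by rewrite !exprS; apply: eqAmodM => //; rewrite rpredX.
Qed.

Lemma dvdA_mulr (e y : algC) : y \in Aint -> (e %| y * e)%A.
Proof. by move=> Ay; rewrite -eqAmod0; apply: eqAmodMl0. Qed.

Lemma dvdA_mulrn (n : nat) (y : algC) : y \in Aint -> (n%:R %| y *+ n)%A.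
Proof. by move=> Ay; rewrite -[y *+ n]mulr_natr; apply: dvdA_mulr. Qed.

Lemma Frob2 p a b : prime p -> a \in Aint -> b \in Aint ->
  ((a + b) ^+ p == a ^+ p + b ^+ p %[mod p%:R])%A.
Proof.
move=> pr Aa Ab; have p_gt1 := prime_gt1 pr.
case: p pr p_gt1 => [|n] //= pr n_gt0.
rewrite exprDn big_ord_recr /= big_ord_recl /= subn0 subnn !expr0 !bin0 binn.
rewrite !mulr1n mulr1 mul1r [X in (X == _ %[mod _])%A]addrC addrA.
idtac.
rewrite /eqAmod (addrC (b ^+ _)) addrAC subrr add0r; apply: rpred_sum => i _ /=.
have: (n.+1 %| 'C(n.+1, bump 0 i))%N.
  by apply: prime_dvd_bin => //; rewrite /bump /= add1n ltnS ltn_ord.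
move/divnK <-; rewrite mulrnA; apply: dvdA_mulrn.
by rewrite rpredMn // rpredM // rpredX.
Qed.

Lemma FrobSum p (I : Type) (r : seq I) (P : pred I) (F : I -> algC) :
  prime p -> (forall i, F i \in Aint) ->
  ((\sum_(i <- r | P i) F i) ^+ p == \sum_(i <- r | P i) F i ^+ p %[mod p%:R])%A.
Proof.
move=> pr AF; elim: r => [|x r IH]; first by rewrite !big_nil expr0n eqn0Ngt prime_gt0.
rewrite !big_cons; case: (P x) => //.
have AS : \sum_(i <- r | P i) F i \in Aint by apply: rpred_sum.
have H1 := Frob2 _ _ _ pr (AF x) AS. apply: (eqAmod_trans H1).
by rewrite eqAmodDl.
Qed.

Lemma FrobPow p e (I : Type) (r : seq I) (P : pred I) (F : I -> algC) :
  prime p -> (forall i, F i \in Aint) ->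
  ((\sum_(i <- r | P i) F i) ^+ (p ^ e) == \sum_(i <- r | P i) F i ^+ (p ^ e) %[mod p%:R])%A.
Proof.
move=> pr AF; elim: e => [|e IH]; first by rewrite expn0 !expr1.
rewrite expnSr !exprM.
have A1 : \sum_(i <- r | P i) F i \in Aint by apply: rpred_sum.
have A2 : \sum_(i <- r | P i) F i ^+ (p ^ e) \in Aint.
  by apply: rpred_sum => i _; rewrite rpredX.
apply: eqAmod_trans (eqAmodX _ _ _ p (rpredX _ A1) A2 IH) _.
have -> : \sum_(i <- r | P i) F i ^+ (p ^ e * p) = \sum_(i <- r | P i) (F i ^+ (p ^ e)) ^+ p by apply: eq_bigr => i _; rewrite exprM.
apply: (FrobSum p I r P (fun i => F i ^+ (p ^ e)) pr) => i; rewrite rpredX //.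
Qed.

Lemma FermatNat p e (n : nat) : prime p ->
  ((n%:R : algC) ^+ (p ^ e) == n%:R %[mod p%:R])%A.
Proof.
move=> pr.
have -> : (n%:R : algC) = \sum_(i < n) (1 : algC) by rewrite sumr_const card_ord.
have H := FrobPow p e _ (index_enum 'I_n) (fun _ => true) (fun _ => (1:algC)) pr (fun _ => rpred1 _).
apply: eqAmod_trans H _.
by under eq_bigr do rewrite expr1n.
Qed.

Lemma FermatInt p e (x : algC) : prime p -> x \in Num.int ->
  (x ^+ (p ^ e) == x %[mod p%:R])%A.
Proof.
move=> pr /intrP[m ->]; case: m => n; first exact: FermatNat.
rewrite NegzE; set N := n.+1.
have Exy : ((- N%:~R : algC) == ((p.-1 * N)%:R) %[mod p%:R])%A.
  rewrite /eqAmod -opprD -natrD -{1}[N]mul1n -mulnDl add1n prednK ?prime_gt0 //.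
  by rewrite rpredN natrM mulrC; apply: dvdA_mulr; rewrite Aint_Cnat ?natr_nat.
apply: eqAmod_trans (eqAmodX _ _ _ _ _ _ Exy) _; rewrite ?rpredN ?Aint_int ?Aint_Cnat ?natr_nat //.
apply: eqAmod_trans (FermatNat _ _ _ pr) _.
by rewrite eqAmod_sym.
Qed.

Lemma sylow_pow (gT : finGroupType) (G : {group gT}) p (P : {set Iirr G}) i g :
  sylow_lin_chars p P -> i \in P -> g \in G -> 'chi[G]_i g ^+ #|P| = 1.
Proof.
case=> sPL P0 Pmul _ Pi Gg.
have lin j : j \in P -> 'chi[G]_j \is a linear_char.
  by move=> Pj; have := subsetP sPL j Pj; rewrite inE.
pose f j := odflt 0 [pick l in P | 'chi[G]_l == 'chi_i * 'chi_j].
have fP j : j \in P -> f j \in P /\ 'chi_(f j) = 'chi_i * 'chi_j.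
  move=> Pj; rewrite /f; case: pickP => [l /andP[Pl /eqP El] //|/= none].
  by have [l Pl El] := Pmul i j Pi Pj; have := none l; rewrite Pl El eqxx.
have finj : {in P &, injective f}.
  move=> j1 j2 P1 P2 E.
  have : 'chi_i * 'chi_j1 = 'chi_i * 'chi[G]_j2.
    by rewrite -(fP _ P1).2 -(fP _ P2).2 E.
  by move/(mulrI (lin_char_unitr (lin i Pi)))/irr_inj.
have fPP : f @: P = P.
  apply/eqP; rewrite eqEcard card_in_imset // leqnn andbT.
  by apply/subsetP => _ /imsetP[j Pj ->]; exact: (fP j Pj).1.
have nz : \prod_(j in P) 'chi[G]_j g != 0.
  by apply/prodf_neq0 => j Pj; apply: (lin_char_neq0 (lin j Pj) Gg).
apply: (mulIf nz); rewrite mul1r.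
rewrite -prodr_const -big_split /=.
rewrite -{2}fPP big_imset //=.
by apply: eq_bigr => j Pj; rewrite (fP j Pj).2 cfunE.
Qed.

Lemma pds_quad (gT : finGroupType) (G : {group gT}) (D : {set gT})
    (v k lam mu : nat) (i : Iirr G) :
  is_PDS G D v k lam mu -> regular_PDS D -> i != 0 ->
  'chi[G]_i \is a linear_char ->
  chi_at i D ^+ 2 = (k%:R - mu%:R) + (lam%:R - mu%:R) * chi_at i D.
Proof.
case=> sDG _ cardD cD cGD [invD D1] i0 lin.
set chi := 'chi[G]_i.
have sumG : \sum_(g in G) chi g = 0.
  have nz : (#|G|%:R : algC) != 0 by rewrite pnatr_eq0 -lt0n cardG_gt0.
  have := cfdot_irr i 0; rewrite (negPf i0) cfdotE irr0 => /eqP.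
  rewrite mulf_eq0 invr_eq0 (negPf nz) /= => /eqP S; apply: etrans S.
  by apply: eq_bigr => g Gg; rewrite cfun1E Gg conjC1 mulr1.
have count1 : pds_count D 1%g = k.
  rewrite /pds_count -cardD.
  have -> : [set u in setX D D | (u.1 * u.2^-1)%g == 1%g] = (fun x => (x, x)) @: D.
    apply/setP => -[a b]; rewrite !inE /=; apply/idP/imsetP.
      by case/andP => /andP[Da Db]; rewrite -eq_mulgV1 => /eqP <-; exists a.
    by case=> x Dx [-> ->]; rewrite Dx mulgV eqxx.
  by rewrite card_imset // => x y [].
have count0 g : g \notin G -> pds_count D g = 0%N.
  move=> Gg; rewrite /pds_count; apply/eqP; rewrite cards_eq0; apply/eqP/setP=> u.
  rewrite !inE; apply/negbTE/negP => /andP[/andP[D1' D2] /eqP E]; move: Gg.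
  by rewrite -E groupM ?groupV // (subsetP sDG).
have Einv : \sum_(b in D) chi b = \sum_(b in D) chi (b^-1)%g.
  by rewrite -{1}invD big_imset //= => x y _ _; apply: invg_inj.
rewrite expr2 {2}/chi_at Einv /chi_at big_distrl /=.
under eq_bigr do rewrite big_distrr /=.
rewrite pair_big /=.
rewrite (eq_bigr (fun u => chi (u.1 * u.2^-1)%g)); last first.
  by move=> u /andP[Da Db]; rewrite /chi lin_charM ?groupV // (subsetP sDG).
rewrite (partition_big (fun u => (u.1 * u.2^-1)%g) xpredT) //=.
have inner g : \sum_(u | ((u.1 \in D) && (u.2 \in D)) && ((u.1 * u.2^-1)%g == g))
    chi (u.1 * u.2^-1)%g = chi g *+ pds_count D g.
  rewrite (eq_bigr (fun _ => chi g)); last by move=> u /andP[_ /eqP ->].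
  rewrite (eq_bigl (fun u => u \in [set u in setX D D | (u.1 * u.2^-1)%g == g])).
    by rewrite sumr_const.
  by move=> u; rewrite !inE.
under eq_bigr do rewrite inner.
have pw g : chi g *+ pds_count D g =
   (if g == 1%g then k%:R - mu%:R else 0) +
   (if g \in D then (lam%:R - mu%:R) * chi g else 0) +
   (if g \in G then mu%:R * chi g else 0).
  case: (eqVneq g 1%g) => [->|g1].
    by rewrite count1 (negPf D1) group1 /chi lin_char1 // addr0 mulr1 subrK.
  case Gg: (g \in G); last first.
    have Dg : (g \in D) = false by apply: contraFF (subsetP sDG g) Gg.
    by rewrite count0 ?Gg // Dg !addr0.
  case Dg: (g \in D).
    by rewrite cD // add0r -mulrDl subrK mulr_natl.
  by rewrite cGD ?inE ?Dg ?Gg // !add0r mulr_natl.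
under eq_bigr do rewrite pw.
rewrite !big_split /= -!big_mkcond /= big_pred1_eq -!mulr_sumr sumG mulr0 addr0.
by [].
Qed.

Arguments pds_quad {gT G D v k lam mu i}.
Arguments FermatInt {p} e {x}.

Lemma Delta_C (s k lam mu : nat) : (s%:Z ^+ 2)%R = PDS_Delta k lam mu ->
  (s%:R : algC) ^+ 2 = (lam%:R - mu%:R) ^+ 2 + 4 * (k%:R - mu%:R).
Proof.
move/(congr1 (fun z : int => (z%:~R : algC))).
by rewrite /PDS_Delta /= intrD !intrM !intrB => H; rewrite !expr2; exact: H.
Qed.

Theorem mainTheorem5 (gT : finGroupType) (G : {group gT}) (D : {set gT})
    (v k lam mu : nat) (s p : nat) (P : {set Iirr G}) :
  is_PDS G D v k lam mu ->
  regular_PDS D ->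
  (0 < mu < k)%N ->
  (s%:Z ^+ 2)%R = PDS_Delta k lam mu ->
  prime p ->
  ~~ (p %| s)%N ->
  sylow_lin_chars p P ->
  (1 < #|P|)%N ->
  (forall i', i' \in P -> i' != 0%R ->
     (\sum_(i in P) chi_at i D)%R = (k%:R + (#|P| - 1)%:R * chi_at i' D)%R)
  /\ (forall i j, i \in P -> j \in P -> i != 0%R -> j != 0%R ->
        chi_at i D = chi_at j D).
Proof.
move=> pds reg _ hs pr nps syl _.
have pds' := pds; case: pds' => sDG _ cardD _ _.
have syl' := syl; case: syl' => sPL P0 _ cardP.
have lin j : j \in P -> 'chi[G]_j \is a linear_char.
  by move=> Pj; have := subsetP sPL j Pj; rewrite inE.
set c : algC := lam%:R - mu%:R.
have DC := Delta_C _ _ _ _ hs.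
have Aint_x (j : Iirr G) : chi_at j D \in Aint by apply: rpred_sum => d _; apply: Aint_irr.
have sq j : j \in P -> j != 0 -> (chi_at j D * 2 - c) ^+ 2 = (s%:R) ^+ 2.
  move=> Pj j0; have Q := pds_quad pds reg j0 (lin j Pj).
  rewrite DC -/c.
  have -> : (chi_at j D * 2 - c) ^+ 2 = 4 * chi_at j D ^+ 2 - 4 * c * chi_at j D + c ^+ 2 by ring.
  rewrite Q -/c; ring.
have modk j : j \in P -> j != 0 -> (chi_at j D == k%:R %[mod p%:R])%A.
  move=> Pj j0.
  have intx : chi_at j D \in Num.int.
    have : (chi_at j D * 2 - c == s%:R) || (chi_at j D * 2 - c == - s%:R).
      by rewrite -eqf_sqr sq.
    have E : chi_at j D = (chi_at j D * 2 - c + c) / 2.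
      by rewrite subrK mulfK // pnatr_eq0.
    move=> hy; apply: Cint_rat_Aint => //; rewrite E.
    case/orP: hy => /eqP ->; rewrite ?rpredN; apply: rpred_div; rewrite ?rpredD ?rpredB ?rpredN ?rpred_nat //.
  have F1 := FermatInt (logn p #|lin_chars G|) pr intx.
  have F2 := FrobPow p (logn p #|lin_chars G|) _ (index_enum gT) (fun d => d \in D) ('chi[G]_j) pr (Aint_irr j).
  rewrite eqAmod_sym in F1; apply: eqAmod_trans F1 _.
  have <- : \sum_(d <- index_enum gT | d \in D) 'chi[G]_j d ^+ (p ^ logn p #|lin_chars G|) = k%:R.
    rewrite -p_part -cardP -cardD -sumr_const.
    by apply: eq_bigr => d Dd; apply: sylow_pow syl Pj (subsetP sDG d Dd).
  exact: F2.
have eqv i j : i \in P -> j \in P -> i != 0 -> j != 0 -> chi_at i D = chi_at j D.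
  move=> Pi Pj i0 j0.
  have two : (2 : algC) != 0 by rewrite pnatr_eq0.
  have Eij : (chi_at i D == chi_at j D %[mod p%:R])%A.
    by apply: eqAmod_trans (modk i Pi i0) _; rewrite eqAmod_sym modk.
  have : (chi_at i D * 2 - c) ^+ 2 == (chi_at j D * 2 - c) ^+ 2 by rewrite sq ?sq.
  rewrite eqf_sqr => /orP[/eqP E|/eqP E].
    by apply: (mulIf two); apply: (addIr (- c)).
  exfalso; move: nps; apply/negP/negPn.
  set y := chi_at i D * 2 - c.
  have Ay : y \in Aint by rewrite /y /c !rpredB ?rpredM ?Aint_x // Aint_Cnat ?natr_nat.
  have dy : (y == 0 %[mod p%:R])%A.
    have -> : y = chi_at i D - chi_at j D.
      apply: (mulIf two).
      rewrite [RHS]mulrBl; move: E; rewrite /y => E.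
      have -> : chi_at j D * 2 = - (chi_at i D * 2 - c) + c by rewrite E opprK subrK.
      ring.
    by rewrite eqAmod0; exact: Eij.
  have := eqAmodMr Ay dy; rewrite mul0r -expr2 /y sq // -natrX eqAmod0_nat.
  by rewrite Euclid_dvdX // => /andP[].
split => // i' Pi' i'0.
rewrite (bigD1 0) //= (eq_bigr (fun _ => chi_at i' D)); last first.
  by move=> j /andP[Pj j0]; apply: eqv.
rewrite sumr_const mulr_natl.
have -> : #|[pred j | (j \in P) && (j != 0)]| = (#|P| - 1)%N.
  by rewrite (cardsD1 0 P) P0 add1n subn1 /= ; apply: eq_card => j; rewrite !inE andbC.
congr (_ + _).
rewrite /chi_at irr0 (eq_bigr (fun _ => 1)); last first.
  by move=> d Dd; rewrite cfun1E (subsetP sDG d Dd).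
by rewrite sumr_const cardD.
Qed.
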